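(* Consider a human–algorithm system (as defined in the context) whose combining function $c$ is convex as a function of $(a,h)\in[0,\infty)^2$. Then the system does not exhibit complementarity.
   Context: A human–algorithm system consists of: an integer $N\ge1$ (number of regimes); probabilities $p_1,\dots,p_N\ge 0$ with $\sum_i p_i=1$; algorithmic losses $a_1,\dots,a_N\ge 0$ and unaided-human losses $h_1,\dots,h_N\ge0$; and a combining function $c:[0,\infty)^2\to\mathbb{R}$ satisfying $\min(a,h)\le c(a,h)\le\max(a,h)$ for all $a,h\ge0$, where $c(a_i,h_i)$ is the loss of the combined system in regime $i$. Write $A=\sum_i p_i a_i$ and $H=\sum_i p_i h_i$. The system exhibits complementarity if $\sum_{i=1}^N p_i\,c(a_i,h_i)<\min(A,H)$. *)

(* Defs.v *)
From mathcomp Require Import all_boot all_order all_algebra.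
Set Implicit Arguments. Unset Strict Implicit. Unset Printing Implicit Defensive.
Import Order.TTheory GRing.Theory Num.Theory.
Local Open Scope ring_scope.

Definition convex_on_nonneg_quadrant (R : realFieldType) (c : R -> R -> R) : Prop :=
  forall a1 h1 a2 h2 t : R,
    0 <= a1 -> 0 <= h1 -> 0 <= a2 -> 0 <= h2 -> 0 <= t -> t <= 1 ->
    c (t * a1 + (1 - t) * a2) (t * h1 + (1 - t) * h2)
      <= t * c a1 h1 + (1 - t) * c a2 h2.

Definition combining_fun (R : realFieldType) (c : R -> R -> R) : Prop :=
  forall a h : R, 0 <= a -> 0 <= h ->
    Num.min a h <= c a h /\ c a h <= Num.max a h.

Definition complementarity (R : realFieldType) (N : nat) (p a h : 'I_N -> R)
  (c : R -> R -> R) : Prop :=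
  \sum_(i < N) p i * c (a i) (h i)
    < Num.min (\sum_(i < N) p i * a i) (\sum_(i < N) p i * h i).

(* Main.v *)
Require Import Defs.
From mathcomp Require Import all_boot all_order all_algebra.
From mathcomp Require Import ring lra.
Import Order.TTheory GRing.Theory Num.Theory.
Local Open Scope ring_scope.

Lemma jensen (R : realFieldType) (I : eqType) (w a h : I -> R) (c : R -> R -> R)
  (s : seq I) :
  (forall i, 0 <= w i) -> (forall i, 0 <= a i) -> (forall i, 0 <= h i) ->
  convex_on_nonneg_quadrant c ->
  0 < \sum_(i <- s) w i ->
  (\sum_(i <- s) w i) * c ((\sum_(i <- s) w i * a i) / \sum_(i <- s) w i)
                         ((\sum_(i <- s) w i * h i) / \sum_(i <- s) w i)
  <= \sum_(i <- s) w i * c (a i) (h i).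
Proof.
move=> w0 a0 h0 cv; elim: s => [|x s IH]; first by rewrite big_nil ltxx.
rewrite !big_cons.
set S' := \sum_(i <- s) w i.
set A' := \sum_(i <- s) w i * a i.
set H' := \sum_(i <- s) w i * h i.
set C' := \sum_(i <- s) w i * c (a i) (h i).
have S'0 : 0 <= S' by apply: sumr_ge0.
have A'0 : 0 <= A' by apply: sumr_ge0 => i _; apply: mulr_ge0.
have H'0 : 0 <= H' by apply: sumr_ge0 => i _; apply: mulr_ge0.
move=> Spos.
have [S'z|S'p] := eqVneq S' 0.
  have wz : forall i, i \in s -> w i = 0.
    move=> i ii; move/eqP: S'z; rewrite /S' psumr_eq0; last by move=> *.
    by move/allP/(_ i ii)/implyP/(_ isT)/eqP.
  have -> : A' = 0 by rewrite /A' big_seq big1 // => i ii; rewrite wz // mul0r.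
  have -> : H' = 0 by rewrite /H' big_seq big1 // => i ii; rewrite wz // mul0r.
  have -> : C' = 0 by rewrite /C' big_seq big1 // => i ii; rewrite wz // mul0r.
  rewrite S'z !addr0 in Spos *.
  have wn : w x != 0 by rewrite gt_eqF.
  by rewrite !(mulrC (w x) (_ x)) !mulfK.
have S'pos : 0 < S' by rewrite lt_def S'p S'0.
have Sn : w x + S' != 0 by rewrite gt_eqF.
have t0 : 0 <= w x / (w x + S') by rewrite divr_ge0 // ltW.
have t1 : w x / (w x + S') <= 1 by rewrite ler_pdivrMr // mul1r lerDl.
have := cv (a x) (h x) (A' / S') (H' / S') (w x / (w x + S')) (a0 x) (h0 x)
  (divr_ge0 A'0 S'0) (divr_ge0 H'0 S'0) t0 t1.
have e1 : 1 - w x / (w x + S') = S' / (w x + S') by field.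
have ea : w x / (w x + S') * a x + S' / (w x + S') * (A' / S') =
          (w x * a x + A') / (w x + S') by field; rewrite ?S'p ?Sn ?andbT; try split.
have eh : w x / (w x + S') * h x + S' / (w x + S') * (H' / S') =
          (w x * h x + H') / (w x + S') by field; rewrite ?S'p ?Sn ?andbT; try split.
rewrite e1 ea eh => H.
have := ler_wpM2l (ltW Spos) H.
move=> H2; apply: (le_trans H2).
set cc := c (A' / S') (H' / S').
have -> : (w x + S') * (w x / (w x + S') * c (a x) (h x) + S' / (w x + S') * cc) = w x * c (a x) (h x) + S' * cc by field.
by rewrite lerD2l; apply: IH.
Qed.

Theorem lemma4 (R : realFieldType) (N : nat) (p a h : 'I_N -> R)
  (c : R -> R -> R) :
  (0 < N)%N ->
  (forall i, 0 <= p i) -> \sum_(i < N) p i = 1 ->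
  (forall i, 0 <= a i) -> (forall i, 0 <= h i) ->
  combining_fun c ->
  convex_on_nonneg_quadrant c ->
  ~ complementarity p a h c.
Proof.
move=> _ p0 p1 a0 h0 cf cv; rewrite /complementarity.
have := @jensen R _ p a h c (index_enum 'I_N) p0 a0 h0 cv.
change (\sum_(i <- index_enum 'I_N) p i) with (\sum_(i < N) p i).
change (\sum_(i <- index_enum 'I_N) p i * a i) with (\sum_(i < N) p i * a i).
change (\sum_(i <- index_enum 'I_N) p i * h i) with (\sum_(i < N) p i * h i).
change (\sum_(i <- index_enum 'I_N) p i * c (a i) (h i)) with (\sum_(i < N) p i * c (a i) (h i)).
rewrite p1 ltr01 !divr1 mul1r => /(_ isT) J.
have A0 : 0 <= \sum_(i < N) p i * a i by apply: sumr_ge0 => i _; apply: mulr_ge0.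
have H0 : 0 <= \sum_(i < N) p i * h i by apply: sumr_ge0 => i _; apply: mulr_ge0.
have [m _] := cf _ _ A0 H0.
by move=> lt; have := lt_le_trans lt (le_trans m J); rewrite ltxx.
Qed.
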